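(* For every integer $n>7$, $F_n\ge 3$.
   Context: Define maps $G,S:\mathbb Z^2\to\mathbb Z^2$ by $G(x,y)=(x+y,y)$ and $S(x,y)=(3x-2y+1,\,2x-y+1)$. Define the array $(F_{n,k})_{n,k\ge 0}$ by $F_{0,0}=1$ and, for $(n,k)\neq(0,0)$, $F_{n,k}$ is the number of finite words $w=w_1w_2\cdots w_m$ ($m\ge 0$) over the alphabet $\{G,S\}$ with $w_1\circ w_2\circ\cdots\circ w_m(1,1)=(n,k)$ (the empty word acts as the identity). Equivalently: start with all entries $0$, set $F_{0,0}=1$ and $F_{1,1}=1$, and thereafter, whenever an entry $F_{n,k}$ with $n\ge 1$ changes its value, increase $F_{n+k,k}$ and $F_{3n+1-2k,\,2n+1-k}$ by $1$. Set $F_n=\sum_{k\ge0}F_{n,k}$ (a finite sum since $F_{n,k}=0$ for $k>n$). *)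

(* Defs.v *)
From mathcomp Require Import all_boot all_order all_algebra.
From mathcomp Require Import zify.
Set Implicit Arguments. Unset Strict Implicit. Unset Printing Implicit Defensive.
Import Order.TTheory GRing.Theory Num.Theory.
Local Open Scope ring_scope.

Definition Gmap (p : int * int) : int * int := (p.1 + p.2, p.2).
Definition Smap (p : int * int) : int * int :=
  (3 * p.1 - 2 * p.2 + 1, 2 * p.1 - p.2 + 1).

Definition letter (b : bool) : int * int -> int * int :=
  if b then Gmap else Smap.

Fixpoint act (w : seq bool) : int * int :=
  if w is b :: w' then letter b (act w') else (1, 1).

Definition nwords (m n k : nat) : nat :=
  #|[pred t : m.-tuple bool | act t == (n%:Z, k%:Z)]|%N.

(* Words reaching (n,k) have length < n (lemma act_size_bound below),
   so summing over lengths m <= n counts all of them. *)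
Definition F (n k : nat) : nat :=
  if (n == 0%N) && (k == 0%N) then 1%N else (\sum_(m < n.+1) nwords m n k)%N.

(* F_n = sum_k F_{n,k}; F_{n,k} = 0 for k > n (lemma act_snd_bound). *)
Definition Frow (n : nat) : nat := (\sum_(k < n.+1) F n k)%N.

Lemma act_inv (w : seq bool) :
  (size w)%:Z + 1 <= (act w).1 /\ 1 <= (act w).2 /\ (act w).2 <= (act w).1.
Proof.
elim: w => [|b w [h1 [h2 h3]]] /=; first by [].
case: b; rewrite /letter /Gmap /Smap /=; lia.
Qed.

Lemma act_size_bound (w : seq bool) (n k : nat) :
  act w = (n%:Z, k%:Z) -> (size w < n)%N /\ (k <= n)%N.
Proof.
move=> e; have [h1 [h2 h3]] := act_inv w; rewrite e /= in h1 h2 h3; lia.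
Qed.

(* Main.v *)
Require Import Defs.
From mathcomp Require Import all_boot all_order all_algebra.
From mathcomp Require Import zify ring lra.
Import Order.TTheory GRing.Theory Num.Theory.
Local Open Scope ring_scope.

Lemma actG a w : act (nseq a true ++ w) = ((act w).1 + a%:Z * (act w).2, (act w).2).
Proof.
elim: a => [|a IH] /=; first by rewrite mul0r addr0; case: (act w).
rewrite IH /Gmap /=; congr pair; rewrite intS; ring.
Qed.

Lemma actS j w : act (nseq j false ++ w) =
  ((act w).1 + j%:Z * (2 * ((act w).1 - (act w).2) + 1),
   (act w).2 + j%:Z * (2 * ((act w).1 - (act w).2) + 1)).
Proof.
elim: j => [|j IH] /=; first by rewrite !mul0r !addr0; case: (act w).
rewrite IH /Smap /=; congr pair; rewrite intS; ring.
Qed.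

Lemma F1 j : act (true :: nseq j false) = ((2*j+2)%N%:Z, (j+1)%N%:Z).
Proof. rewrite /= -[nseq j false]cats0 actS /= /Gmap /=; congr pair; lia. Qed.
Lemma F2 j : act [:: true, true & nseq j false] = ((3*j+3)%N%:Z, (j+1)%N%:Z).
Proof. rewrite /= -[nseq j false]cats0 actS /= /Gmap /=; congr pair; lia. Qed.
Lemma F3 j : act (false :: nseq j true) = ((3*j+2)%N%:Z, (2*j+2)%N%:Z).
Proof. rewrite /= -[nseq j true]cats0 actG /= /Smap /=; congr pair; lia. Qed.
Lemma F4 j : act [:: false, true & nseq j false] = ((4*j+5)%N%:Z, (3*j+4)%N%:Z).
Proof. rewrite /= -[nseq j false]cats0 actS /= /Smap /Gmap /=; congr pair; lia. Qed.
Lemma F5 j : act [:: true, true & nseq j false ++ [:: true]] = ((9*j+4)%N%:Z, (3*j+1)%N%:Z).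
Proof. rewrite /= actS /= /Gmap /=; congr pair; lia. Qed.
Lemma F6 j : act (nseq 5 true ++ nseq j false ++ [:: true]) = ((18*j+7)%N%:Z, (3*j+1)%N%:Z).
Proof. rewrite actG actS /= /Gmap /=; congr pair; lia. Qed.
Lemma F7 j : act [:: true, false, true, true & nseq j false ++ [:: true]] = ((36*j+19)%N%:Z, (15*j+8)%N%:Z).
Proof. rewrite /= actS /= /Gmap /Smap /=; congr pair; lia. Qed.

Lemma Fpos (w : seq bool) (n k : nat) : act w = (n%:Z, k%:Z) -> (0 < F n k)%N.
Proof.
move=> e; have [hs hk] := act_size_bound e.
rewrite /F; case: ifP => [//|_].
have hm : (size w < n.+1)%N by apply: ltnW.
rewrite (bigD1 (Ordinal hm)) //= ltn_addr //.
apply/card_gt0P; exists (in_tuple w); by rewrite inE /= e.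
Qed.

Lemma sum3 (f : nat -> nat) N a b c : (a < N)%N -> (b < N)%N -> (c < N)%N ->
  a != b -> a != c -> b != c -> (0 < f a)%N -> (0 < f b)%N -> (0 < f c)%N ->
  (3 <= \sum_(i < N) f i)%N.
Proof.
move=> ha hb hc ab ac bc fa fb fc.
rewrite (bigD1 (Ordinal ha)) //= (bigD1 (Ordinal hb)) /=; last by rewrite -val_eqE /= eq_sym.
rewrite (bigD1 (Ordinal hc)) /=; last by rewrite -!val_eqE /= ![c == _]eq_sym ac bc.
lia.
Qed.
Lemma key n k (w : seq bool) : (1 < k < n)%N -> act w = (n%:Z, k%:Z) -> (3 <= Frow n)%N.
Proof.
move=> /andP[k1 kn] e; rewrite /Frow.
apply: (@sum3 (F n) n.+1 1 k n) => //; try lia.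
- apply: (@Fpos (nseq n.-1 true)); rewrite -[nseq _ _]cats0 actG /=; congr pair; lia.
- exact: Fpos e.
- apply: (@Fpos (nseq n.-1 false)); rewrite -[nseq _ _]cats0 actS /=; congr pair; lia.
Qed.

Theorem theorem12 (n : nat) : (7 < n)%N -> (3 <= Frow n)%N.
Proof.
move=> h.
have [e2|o2] := boolP (n %% 2 == 0)%N.
  apply: (@key n (n %/ 2) (true :: nseq (n %/ 2).-1 false)); first lia.
  rewrite F1; congr pair; lia.
have [e3|o3] := boolP (n %% 3 == 0)%N.
  apply: (@key n (n %/ 3) [:: true, true & nseq (n %/ 3).-1 false]); first lia.
  rewrite F2; congr pair; lia.
have [e32|o32] := boolP (n %% 3 == 2)%N.
  apply: (@key n (2 * (n %/ 3) + 2) (false :: nseq (n %/ 3) true)); first lia.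
  rewrite F3; congr pair; lia.
have [e4|o4] := boolP (n %% 4 == 1)%N.
  apply: (@key n (3 * ((n - 5) %/ 4) + 4) [:: false, true & nseq ((n - 5) %/ 4) false]); first lia.
  rewrite F4; congr pair; lia.
have [e9|o9] := boolP (n %% 9 == 4)%N.
  apply: (@key n (3 * (n %/ 9) + 1) [:: true, true & nseq (n %/ 9) false ++ [:: true]]); first lia.
  rewrite F5; congr pair; lia.
have [e18|o18] := boolP (n %% 18 == 7)%N.
  apply: (@key n (3 * (n %/ 18) + 1) (nseq 5 true ++ nseq (n %/ 18) false ++ [:: true])); first lia.
  rewrite F6; congr pair; lia.
apply: (@key n (15 * (n %/ 36) + 8) [:: true, false, true, true & nseq (n %/ 36) false ++ [:: true]]); first lia.
rewrite F7; congr pair; lia.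
Qed.
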